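(* For positive integers $r,c$, let $R_{r,c}=(c^r)$ be the rectangular partition with $r$ parts all equal to $c$. Then $$\mathbb{SG}(\mathcal{L}(R_{r,c}))=\begin{cases}0 & c>1,\ r>1,\ c+r\text{ even},\\ 2 & (c\le2\text{ or } r\le2)\text{ and } c+r \text{ odd},\\ 1&\text{otherwise}.\end{cases}$$
   Context: A partition is a finite non-increasing sequence of positive integers; $()$ is the empty partition. For non-negative $i,j$, $\lambda[i,j]$ is $(\lambda_{i+1}-j,\dots,\lambda_r-j)$ with all non-positive entries removed. LCTR: positions $\mathcal{L}(\lambda)$; if $\lambda\neq()$ the two moves go to $\mathcal{L}(\lambda[1,0])$ and $\mathcal{L}(\lambda[0,1])$; $\mathcal{L}(())$ is terminal. Normal play; $\mathbb{SG}(A)=\operatorname{mex}\{\mathbb{SG}(B):A\to B\}$. *)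

(* Defs.v *)
From mathcomp Require Import all_boot.
Set Implicit Arguments. Unset Strict Implicit. Unset Printing Implicit Defensive.

Definition is_partition (l : seq nat) : bool :=
  sorted geq l && all (fun x => 0 < x) l.

(* lambda[i,j] = (lambda_{i+1} - j, ..., lambda_r - j), non-positive entries removed.
   Truncated nat subtraction yields 0 exactly for non-positive entries. *)
Definition shift (i j : nat) (l : seq nat) : seq nat :=
  filter (fun x => 0 < x) (map (fun x => x - j) (drop i l)).

Definition mex (s : seq nat) : nat :=
  find (fun n => n \notin s) (iota 0 (size s).+1).

(* Sprague-Grundy value of LCTR with explicit recursion fuel. Every move strictly
   decreases the sum of parts, so fuel (sumn l).+1 is sufficient. *)
Fixpoint sg_fuel (fuel : nat) (l : seq nat) : nat :=
  match fuel with
  | 0 => 0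
  | f.+1 =>
    match l with
    | [::] => 0
    | _ => mex [:: sg_fuel f (shift 1 0 l); sg_fuel f (shift 0 1 l)]
    end
  end.

Definition SG_LCTR (l : seq nat) : nat := sg_fuel (sumn l).+1 l.

(* Main.v *)
Require Import Defs.
From mathcomp Require Import all_boot.
From mathcomp Require Import zify.

Definition F (r c : nat) : nat :=
  if (r == 0) || (c == 0) then 0 else
    if [&& 1 < c, 1 < r & ~~ odd (c + r)] then 0
    else if ((c <= 2) || (r <= 2)) && odd (c + r) then 2
    else 1.

Lemma F_rec r c : F r.+1 c.+1 = mex [:: F r c.+1; F r.+1 c].
Proof.
rewrite /F.
case: r => [|[|[|r]]]; case: c => [|[|[|c]]] //=;
  rewrite ?addnS ?addSn /=; try (case: (odd (r + c)) => //=);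
  try (case: (odd c) => //=); try (case: (odd r) => //=);
  rewrite ?addn0 ?addn1 ?addn2 /= //; try (case: (odd c) => //=);
  try (case: (odd r) => //=).
all: by case: (odd (c + r)).
Qed.

Lemma sg_nil f : sg_fuel f [::] = 0.
Proof. by case: f. Qed.

Lemma shift10 r c : 0 < c -> shift 1 0 (nseq r c) = nseq r.-1 c.
Proof.
move=> hc; rewrite /shift; case: r => [|r] //=.
rewrite drop0; elim: r => [|r IH] //=; by rewrite subn0 hc IH.
Qed.

Lemma shift01 r c : shift 0 1 (nseq r c.+1) = if c == 0 then [::] else nseq r c.
Proof.
rewrite /shift drop0; elim: r => [|r IH] /=; first by case: (c == 0).
rewrite subn1 /= IH; by case: c {IH}.
Qed.

Lemma sg_main n : forall r c f, 0 < c -> r * c <= n -> r * c < f ->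
  sg_fuel f (nseq r c) = F r c.
Proof.
elim: n => [|n IH] r c f hc.
- move=> h _; have -> : r = 0 by nia.
  by rewrite sg_nil /F.
- move=> hn hf.
  case: r hn hf => [|r] hn hf; first by rewrite sg_nil /F.
  case: c hc hn hf => [|c] // _ hn hf.
  case: f hf => [|f] hf; first by [].
  rewrite F_rec [LHS]/= -[c.+1 :: _]/(nseq r.+1 c.+1).
  rewrite shift10 // shift01 succnK.
  congr (mex [:: _; _]).
  + apply: IH => //; nia.
  + case: eqP => [->|/eqP cn0]; first by rewrite sg_nil /F orbT.
    apply: IH; [lia|nia|nia].
Qed.

Theorem mainTheorem12 (r c : nat) : 0 < r -> 0 < c ->
  SG_LCTR (nseq r c) =
    if [&& 1 < c, 1 < r & ~~ odd (c + r)] then 0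
    else if ((c <= 2) || (r <= 2)) && odd (c + r) then 2
    else 1.
Proof.
move=> hr hc; rewrite /SG_LCTR (@sg_main (r * c)) //.
- by rewrite /F; case: r hr => //; case: c hc.
- have -> : sumn (nseq r c) = r * c.
    by elim: r {hr} => [|r IH] //=; rewrite IH mulSn.
  by [].
Qed.
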